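(* Let $\nu>0$, $b>0$ and let $f:\mathbb{R}\to\mathbb{R}$ be continuously differentiable with: $f(0)=f(a)=f(1)=0$ for some $a\in(0,1)$; $f(x)<0$ for $x\in(0,a)$ and $f(x)>0$ for $x\in(a,1)$; $f'(0)<0$, $f'(a)>0$, $f'(1)<0$; and $\int_0^1 f(v)\,dv\ge 0$. Let $\hat v:\mathbb{R}\to\mathbb{R}$ be a monotone increasing $C^2$ function with $\lim_{x\to-\infty}\hat v(x)=0$, $\lim_{x\to+\infty}\hat v(x)=1$, satisfying $c\hat v_x=\nu\hat v_{xx}+bf(\hat v)$ on $\mathbb{R}$ for some constant $c\in\mathbb{R}$. Then: (i) $\hat v_x^2(x)\le \frac{2b}{\nu}\int_{\hat v(x)}^1 f(v)\,dv$ for all $x\in\mathbb{R}$; in particular $\lim_{x\to+\infty}e^{-\alpha\frac{c}{\nu}x}\hat v_x^2(x)=0$ for all $\alpha\ge 0$. (ii) The function $x\mapsto e^{-2\frac{c}{\nu}x}\hat v_x^2(x)$ is increasing on $\{x\le \hat v^{-1}(a)\}$ and decreasing on $\{x\ge \hat v^{-1}(a)\}$; in particular $\lim_{x\to\pm\infty}e^{-\alpha\frac{c}{\nu}x}\hat v_x^2(x)=0$ for all $\alpha\in[0,2)$.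
   Context: $\hat v$ is a travelling wave of the reaction–diffusion equation $\partial_t v=\nu v_{xx}+bf(v)$ with wave speed $c$; under the assumption $\int_0^1 f\,dv\ge 0$ it is known that $c\ge 0$. *)

(* Defs.v *)
From Stdlib Require Import Reals.
From Coquelicot Require Import Coquelicot.
Open Scope R_scope.

Definition is_C1 (f : R -> R) : Prop :=
  forall x, ex_derive f x /\ continuous (Derive f) x.

Definition is_C2 (v : R -> R) : Prop :=
  forall x, ex_derive v x /\ ex_derive (Derive v) x /\
            continuous (Derive (Derive v)) x.

Definition wsq (alpha c nu : R) (v : R -> R) (x : R) : R :=
  exp (- alpha * (c / nu) * x) * (Derive v x) ^ 2.

(* Main.v *)
Require Import Defs.
From Stdlib Require Import Reals.
From Coquelicot Require Import Coquelicot.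
Open Scope R_scope.
From Stdlib Require Import Lra.


Lemma incr_of_deriv (g dg : R -> R) (x y : R) :
  (forall t, is_derive g t (dg t)) -> (forall t, x <= t <= y -> 0 <= dg t) ->
  x <= y -> g x <= g y.
Proof.
intros Hd Hp Hxy.
destruct (MVT_gen g x y dg) as [z [Hz Heq]].
- intros; apply Hd.
- intros t _. apply continuity_pt_filterlim. apply (ex_derive_continuous (V:=R_NormedModule) g). exists (dg t); apply Hd.
- rewrite Rmin_left in Hz by lra. rewrite Rmax_right in Hz by lra.
  assert (0 <= dg z) by (apply Hp; lra). nra.
Qed.

Lemma deriv_nonneg (g : R -> R) (l x : R) :
  (forall s t, s <= t -> g s <= g t) -> is_derive g x l -> 0 <= l.
Proof.
intros Hm Hd. apply is_derive_Reals in Hd.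
destruct (Rle_lt_dec 0 l) as [h|h]; auto.
destruct (Hd (- l)) as [d Hdd]; [lra|].
assert (Hh: (d/2) <> 0) by (generalize (cond_pos d); lra).
specialize (Hdd (d/2) Hh).
assert (Rabs (d/2) < d) by (rewrite Rabs_pos_eq; generalize (cond_pos d); lra).
specialize (Hdd H).
assert (0 <= (g (x + d/2) - g x) / (d/2)).
{ apply Rdiv_le_0_compat. assert (g x <= g (x+d/2)) by (apply Hm; generalize (cond_pos d); lra). lra.
  generalize (cond_pos d); lra. }
revert Hdd. unfold Rabs; destruct Rcase_abs; lra.
Qed.

Lemma lim_pinf (g : R -> R) (l : R) : is_lim g p_infty l ->
  forall eps, 0 < eps -> exists M, forall x, M < x -> Rabs (g x - l) < eps.
Proof.
intros H eps He. apply is_lim_spec in H. exact (H (mkposreal eps He)).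
Qed.
Lemma lim_minf (g : R -> R) (l : R) : is_lim g m_infty l ->
  forall eps, 0 < eps -> exists M, forall x, x < M -> Rabs (g x - l) < eps.
Proof.
intros H eps He. apply is_lim_spec in H. exact (H (mkposreal eps He)).
Qed.
Lemma to_lim_pinf (g : R -> R) (l : R) :
  (forall eps, 0 < eps -> exists M, forall x, M < x -> Rabs (g x - l) < eps) -> is_lim g p_infty l.
Proof.
intros H. apply is_lim_spec. intros [e He]. exact (H e He).
Qed.
Lemma to_lim_minf (g : R -> R) (l : R) :
  (forall eps, 0 < eps -> exists M, forall x, x < M -> Rabs (g x - l) < eps) -> is_lim g m_infty l.
Proof.
intros H. apply is_lim_spec. intros [e He]. exact (H e He).
Qed.


Lemma exp_small (y : R) : 0 < y <= 1/2 -> exp y <= 1 + 2*y.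
Proof.
intros Hy. assert (H1 := exp_ineq1 (-y)). assert (-y <> 0) by lra.
specialize (H1 H). assert (Hm: exp (-y) * exp y = 1).
{ rewrite <- exp_plus. replace (-y+y) with 0 by ring. apply exp_0. }
assert (0 < exp y) by apply exp_pos.
nra.
Qed.

Lemma decay_p (v w w' : R -> R) (K B1 : R) :
  (forall t, is_derive w t (w' t)) -> (forall t, is_derive v t (w t)) ->
  (forall t, 0 <= w t) -> 0 < K -> 0 < B1 ->
  (forall t, Rabs (w' t) <= K * (w t + B1)) ->
  (forall d, 0 < d -> exists M, forall x y, M < x -> M < y -> Rabs (v y - v x) < d) ->
  forall eps, 0 < eps -> exists M, forall x, M < x -> w x < eps.
Proof.
intros Hw Hv Hw0 HK HB Hb Hc eps He.
set (h := Rmin (1/(2*K)) (eps/(4*K*B1))).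
assert (Hh0 : 0 < h).
{ unfold h. apply Rmin_pos; apply Rdiv_lt_0_compat; try lra; nra. }
assert (HKh : K * h <= 1/2).
{ assert (h <= 1/(2*K)) by apply Rmin_l.
  apply Rmult_le_compat_l with (r:=K) in H; [|lra].
  replace (K * (1/(2*K))) with (1/2) in H by (field; lra). lra. }
assert (HKhB : 2*K*h*B1 <= eps/2).
{ assert (h <= eps/(4*K*B1)) by apply Rmin_r.
  apply Rmult_le_compat_l with (r:=2*K*B1) in H; [|nra].
  replace (2*K*B1 * (eps/(4*K*B1))) with (eps/2) in H by (field; lra). nra. }
destruct (Hc (eps*h/8)) as [M HM]; [nra|].
exists M. intros x Hx.
set (phi := fun t => (w t + B1) * exp (K*(t-x))).
assert (Hphi : forall t, is_derive phi t ((w' t + K*(w t + B1)) * exp (K*(t-x)))).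
{ intro t. unfold phi. auto_derive.
  - exists (w' t). apply Hw.
  - replace (Derive (fun x0 => w x0) t) with (w' t) by (symmetry; apply is_derive_unique; apply Hw). unfold Rminus. ring. }
assert (Hlow : forall t, x <= t <= x + h -> (w x + B1) * exp (-(K*h)) <= w t + B1).
{ intros t Ht.
  assert (phi x <= phi t).
  { apply (incr_of_deriv phi _ x t Hphi); [|lra].
    intros s _. apply Rmult_le_pos; [|left; apply exp_pos].
    specialize (Hb s). revert Hb. unfold Rabs; destruct Rcase_abs; nra. }
  unfold phi in H. replace (K*(x-x)) with 0 in H by ring. rewrite exp_0 in H.
  assert (Het : exp (K*(t-x)) <= exp (K*h)).
  { destruct (Req_dec (K*(t-x)) (K*h)) as [E|E]; [rewrite E; lra|].
    left; apply exp_increasing; nra. }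
  assert (Hinv: exp (-(K*h)) * exp (K*h) = 1).
  { rewrite <- exp_plus. replace (-(K*h)+K*h) with 0 by ring. apply exp_0. }
  assert (0 < exp (-(K*h))) by apply exp_pos.
  assert (0 < exp (K*(t-x))) by apply exp_pos.
  assert (0 <= w t + B1) by (generalize (Hw0 t); lra).
  assert ((w x + B1) <= (w t + B1) * exp (K*h)) by nra.
  nra. }
destruct (MVT_gen v x (x+h) w) as [z [Hz Heq]].
- intros; apply Hv.
- intros t _. apply continuity_pt_filterlim. apply (ex_derive_continuous (V:=R_NormedModule) v). exists (w t); apply Hv.
- rewrite Rmin_left in Hz by lra. rewrite Rmax_right in Hz by lra.
  assert (HD : Rabs (v (x+h) - v x) < eps*h/8) by (apply HM; lra).
  assert (Hwz := Hlow z Hz).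
  assert (Hwz' : w z * h < eps * h / 8).
  { rewrite Heq in HD. replace (x+h-x) with h in HD by ring.
    revert HD. unfold Rabs; destruct Rcase_abs; nra. }
  assert (Hwz2 : w z < eps / 8).
  { apply Rmult_lt_reg_r with h; [lra|]. lra. }
  assert (Hinv: exp (-(K*h)) * exp (K*h) = 1).
  { rewrite <- exp_plus. replace (-(K*h)+K*h) with 0 by ring. apply exp_0. }
  assert (HE := exp_small (K*h)). assert (0 < K*h) by nra. specialize (HE (conj H HKh)).
  assert (0 < exp (K*h)) by apply exp_pos.
  assert (w x + B1 <= (w z + B1) * exp (K*h)).
  { apply Rmult_le_compat_r with (r := exp (K*h)) in Hwz; [|lra].
    replace ((w x + B1) * exp (- (K * h)) * exp (K * h)) with ((w x + B1) * (exp (- (K * h)) * exp (K * h))) in Hwz by ring.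
    rewrite Hinv in Hwz. lra. }
  assert (0 <= w z) by apply Hw0.
  nra.
Qed.

Lemma decay_m (v w w' : R -> R) (K B1 : R) :
  (forall t, is_derive w t (w' t)) -> (forall t, is_derive v t (w t)) ->
  (forall t, 0 <= w t) -> 0 < K -> 0 < B1 ->
  (forall t, Rabs (w' t) <= K * (w t + B1)) ->
  (forall d, 0 < d -> exists M, forall x y, x < M -> y < M -> Rabs (v y - v x) < d) ->
  forall eps, 0 < eps -> exists M, forall x, x < M -> w x < eps.
Proof.
intros Hw Hv Hw0 HK HB Hb Hc eps He.
destruct (decay_p (fun x => - v (- x)) (fun x => w (- x)) (fun x => - w' (- x)) K B1)
  with (eps := eps) as [M HM]; auto.
- intro t. auto_derive. exists (w' (-t)); apply Hw.
  replace (Derive (fun x => w x) (-t)) with (w' (-t)) by (symmetry; apply is_derive_unique; apply Hw). ring.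
- intro t. auto_derive. exists (w (-t)); apply Hv.
  replace (Derive (fun x => v x) (-t)) with (w (-t)) by (symmetry; apply is_derive_unique; apply Hv). ring.
- intro t. rewrite Rabs_Ropp. apply Hb.
- intros d Hd. destruct (Hc d Hd) as [M HM]. exists (-M). intros x y Hx Hy.
  replace (- v (- y) - - v (- x)) with (-(v (-y) - v (-x))) by ring. rewrite Rabs_Ropp.
  apply HM; lra.
- exists (-M). intros x Hx. replace x with (- - x) by ring. apply HM. lra.
Qed.

Theorem lemma1p1 (nu b c a : R) (f v : R -> R)
  (Hnu : 0 < nu) (Hb : 0 < b)
  (Hf : is_C1 f)
  (Ha : 0 < a < 1)
  (Hf0 : f 0 = 0) (Hfa : f a = 0) (Hf1 : f 1 = 0)
  (Hneg : forall x, 0 < x < a -> f x < 0)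
  (Hpos : forall x, a < x < 1 -> 0 < f x)
  (Hd0 : Derive f 0 < 0) (Hda : 0 < Derive f a) (Hd1 : Derive f 1 < 0)
  (Hint : 0 <= RInt f 0 1)
  (Hv : is_C2 v)
  (Hmono : forall x y, x <= y -> v x <= v y)
  (Hlm : is_lim v m_infty 0) (Hlp : is_lim v p_infty 1)
  (Hode : forall x, c * Derive v x = nu * Derive (Derive v) x + b * f (v x)) :
  (* (i) *)
  ((forall x, (Derive v x) ^ 2 <= 2 * b / nu * RInt f (v x) 1) /\
   (forall alpha, 0 <= alpha -> is_lim (wsq alpha c nu v) p_infty 0)) /\
  (* (ii) ; x0 is (any) point with v x0 = a, i.e. x0 = v^{-1}(a) *)
  ((forall x0, v x0 = a ->
      (forall x y, x <= y <= x0 -> wsq 2 c nu v x <= wsq 2 c nu v y) /\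
      (forall x y, x0 <= x <= y -> wsq 2 c nu v y <= wsq 2 c nu v x)) /\
   (forall alpha, 0 <= alpha < 2 ->
      is_lim (wsq alpha c nu v) p_infty 0 /\
      is_lim (wsq alpha c nu v) m_infty 0)).
Proof.
unfold wsq.
set (w := Derive v). set (w' := Derive w).
assert (Hd1v : forall t, is_derive v t (w t)).
{ intro t. apply Derive_correct. apply Hv. }
assert (Hd2 : forall t, is_derive w t (w' t)).
{ intro t. apply Derive_correct. apply Hv. }
assert (Hw0 : forall t, 0 <= w t).
{ intro t. apply (deriv_nonneg v (w t) t Hmono (Hd1v t)). }
assert (Hv01 : forall x, 0 <= v x <= 1).
{ intro x. split.
  - destruct (Rle_lt_dec 0 (v x)) as [h|h]; auto.
    destruct (lim_minf v 0 Hlm (- v x)) as [M HM]; [lra|].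
    set (y := Rmin M x - 1).
    assert (v y <= v x) by (apply Hmono; unfold y; generalize (Rmin_r M x); lra).
    assert (Rabs (v y - 0) < - v x) by (apply HM; unfold y; generalize (Rmin_l M x); lra).
    revert H0. unfold Rabs; destruct Rcase_abs; lra.
  - destruct (Rle_lt_dec (v x) 1) as [h|h]; auto.
    destruct (lim_pinf v 1 Hlp (v x - 1)) as [M HM]; [lra|].
    set (y := Rmax M x + 1).
    assert (v x <= v y) by (apply Hmono; unfold y; generalize (Rmax_r M x); lra).
    assert (Rabs (v y - 1) < v x - 1) by (apply HM; unfold y; generalize (Rmax_l M x); lra).
    revert H0. unfold Rabs; destruct Rcase_abs; lra. }
assert (Hfc : forall s, continuous f s).
{ intro s. apply (ex_derive_continuous (V:=R_NormedModule)). apply Hf. }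
destruct (continuity_ab_maj (fun s => Rabs (f s)) 0 1) as [Mx [HMx _]]; [lra| |].
{ intros s _. apply continuity_pt_filterlim. apply continuous_Rabs_comp. apply Hfc. }
set (B := Rabs (f Mx)).
assert (HB0 : 0 <= B) by apply Rabs_pos.
assert (Hfneg : forall s, 0 <= s <= a -> f s <= 0).
{ intros s Hs. destruct (Req_dec s 0) as [->|]; [lra|].
  destruct (Req_dec s a) as [->|]; [lra|]. left; apply Hneg; lra. }
assert (Hfpos : forall s, a <= s <= 1 -> 0 <= f s).
{ intros s Hs. destruct (Req_dec s 1) as [->|]; [lra|].
  destruct (Req_dec s a) as [->|]; [lra|]. left; apply Hpos; lra. }
assert (Hode' : forall x, nu * w' x = c * w x - b * f (v x)).
{ intro x. unfold w', w. rewrite (Hode x). ring. }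
set (K := (Rabs c + 1) / nu). set (B1 := b * B + 1).
assert (HK : 0 < K) by (unfold K; apply Rdiv_lt_0_compat; [generalize (Rabs_pos c)|]; lra).
assert (HB1 : 0 < B1) by (unfold B1; nra).
assert (Hwb : forall t, Rabs (w' t) <= K * (w t + B1)).
{ intro t.
  assert (H1 : Rabs (w' t) * nu <= Rabs c * w t + b * B).
  { replace (Rabs (w' t) * nu) with (Rabs (nu * w' t)) by (rewrite Rabs_mult, (Rabs_pos_eq nu) by lra; ring).
    rewrite Hode'.
    eapply Rle_trans; [apply Rabs_triang|]. rewrite Rabs_Ropp, !Rabs_mult.
    rewrite (Rabs_pos_eq (w t)) by apply Hw0. rewrite (Rabs_pos_eq b) by lra.
    assert (Rabs (f (v t)) <= B) by (apply HMx; apply Hv01). nra. }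
  apply Rmult_le_reg_r with nu; [lra|].
  unfold K. replace ((Rabs c + 1) / nu * (w t + B1) * nu) with ((Rabs c + 1) * (w t + B1)) by (field; lra).
  assert (0 <= Rabs c * (b*B)) by (apply Rmult_le_pos; [apply Rabs_pos|nra]).
  generalize (Rabs_pos c) (Hw0 t). unfold B1. nra. }
assert (Hdp : forall eps, 0 < eps -> exists M, forall x, M < x -> w x < eps).
{ apply (decay_p v w w' K B1); auto.
  intros d Hd. destruct (lim_pinf v 1 Hlp (d/2)) as [M HM]; [lra|].
  exists M. intros x y Hx Hy. generalize (HM y Hy). specialize (HM x Hx).
  revert HM. unfold Rabs; repeat destruct Rcase_abs; lra. }
assert (Hdm : forall eps, 0 < eps -> exists M, forall x, x < M -> w x < eps).
{ apply (decay_m v w w' K B1); auto.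
  intros d Hd. destruct (lim_minf v 0 Hlm (d/2)) as [M HM]; [lra|].
  exists M. intros x y Hx Hy. generalize (HM y Hy). specialize (HM x Hx).
  revert HM. unfold Rabs; repeat destruct Rcase_abs; lra. }
set (G := fun s : R => (RInt f s 1 : R)).
assert (HG : forall s, is_derive G s (- f s)).
{ intro s. apply (is_derive_RInt' f G s 1).
  - apply filter_forall. intro y. apply (RInt_correct (V:=R_CompleteNormedModule)). apply (ex_RInt_continuous (V:=R_CompleteNormedModule)). intros; apply Hfc.
  - apply Hfc. }
set (P := fun x => nu/2 * (w x)^2 - b * G (v x)).
assert (HP : forall x, is_derive P x (c * (w x)^2)).
{ intro x. unfold P. auto_derive.
  - repeat split; [exists (w' x); apply Hd2 | exists (- f (v x)); apply HG | exists (w x); apply Hd1v].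
  - replace (Derive (fun x0 => w x0) x) with (w' x) by (symmetry; apply is_derive_unique; apply Hd2).
    replace (Derive (fun x0 => v x0) x) with (w x) by (symmetry; apply is_derive_unique; apply Hd1v).
    replace (Derive (fun x0 => G x0) (v x)) with (- f (v x)) by (symmetry; apply is_derive_unique; apply HG).
    replace (w' x) with ((c * w x - b * f (v x)) / nu) by (rewrite <- Hode'; field; lra).
    field. lra. }
assert (HGc : forall s, continuous G s).
{ intro s. apply (ex_derive_continuous (V:=R_NormedModule)). exists (- f s); apply HG. }
assert (HGp : is_lim (fun x => G (v x)) p_infty (G 1)).
{ unfold is_lim. eapply filterlim_comp. exact Hlp. apply HGc. }
assert (HGm : is_lim (fun x => G (v x)) m_infty (G 0)).
{ unfold is_lim. eapply filterlim_comp. exact Hlm. apply HGc. }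
assert (HG1 : G 1 = 0) by (unfold G; apply (RInt_point (V:=R_CompleteNormedModule))).
assert (Hw2 : forall x e, 0 < e -> w x < Rmin 1 e -> w x ^ 2 < e).
{ intros x e He Hx. generalize (Rmin_l 1 e) (Rmin_r 1 e) (Hw0 x). intros. nra. }
assert (HPp : forall eps, 0 < eps -> exists M, forall x, M < x -> Rabs (P x) < eps).
{ intros eps He.
  destruct (lim_pinf _ _ HGp (eps/(2*b))) as [M1 HM1]. apply Rdiv_lt_0_compat; lra.
  destruct (Hdp (Rmin 1 (eps/nu))) as [M2 HM2]. apply Rmin_pos; [lra|apply Rdiv_lt_0_compat; lra].
  exists (Rmax M1 M2). intros x Hx.
  assert (H1 := HM1 x ltac:(generalize (Rmax_l M1 M2); lra)).
  assert (H2 := Hw2 x (eps/nu) ltac:(apply Rdiv_lt_0_compat; lra) (HM2 x ltac:(generalize (Rmax_r M1 M2); lra))).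
  rewrite HG1, Rminus_0_r in H1.
  assert (nu * w x ^ 2 < eps).
  { apply Rmult_lt_compat_l with (r:=nu) in H2; [|lra].
    replace (nu * (eps/nu)) with eps in H2 by (field; lra). lra. }
  assert (b * Rabs (G (v x)) < eps/2).
  { apply Rmult_lt_compat_l with (r:=b) in H1; [|lra].
    replace (b * (eps/(2*b))) with (eps/2) in H1 by (field; lra). lra. }
  unfold P. assert (0 <= w x ^ 2) by (apply pow2_ge_0).
  revert H0. unfold Rabs; repeat destruct Rcase_abs; nra. }
assert (HPm : forall eps, 0 < eps -> exists M, forall x, x < M -> Rabs (P x + b * G 0) < eps).
{ intros eps He.
  destruct (lim_minf _ _ HGm (eps/(2*b))) as [M1 HM1]. apply Rdiv_lt_0_compat; lra.
  destruct (Hdm (Rmin 1 (eps/nu))) as [M2 HM2]. apply Rmin_pos; [lra|apply Rdiv_lt_0_compat; lra].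
  exists (Rmin M1 M2). intros x Hx.
  assert (H1 := HM1 x ltac:(generalize (Rmin_l M1 M2); lra)).
  assert (H2 := Hw2 x (eps/nu) ltac:(apply Rdiv_lt_0_compat; lra) (HM2 x ltac:(generalize (Rmin_r M1 M2); lra))).
  assert (nu * w x ^ 2 < eps).
  { apply Rmult_lt_compat_l with (r:=nu) in H2; [|lra].
    replace (nu * (eps/nu)) with eps in H2 by (field; lra). lra. }
  assert (b * Rabs (G (v x) - G 0) < eps/2).
  { apply Rmult_lt_compat_l with (r:=b) in H1; [|lra].
    replace (b * (eps/(2*b))) with (eps/2) in H1 by (field; lra). lra. }
  unfold P. assert (0 <= w x ^ 2) by (apply pow2_ge_0).
  revert H0. unfold Rabs; repeat destruct Rcase_abs; nra. }
assert (HG0 : 0 <= G 0) by exact Hint.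
assert (Hc0 : 0 <= c).
{ destruct (Rle_lt_dec 0 c) as [h|h]; auto. exfalso.
  assert (Hdec : forall x y, x <= y -> P y <= P x).
  { intros x y Hxy.
    assert (- P x <= - P y); [|lra].
    apply (incr_of_deriv (fun t => - P t) (fun t => - (c * w t ^ 2))); auto.
    - intro t. apply (is_derive_opp (fun t => P t)). apply HP.
    - intros t _. assert (0 <= w t ^ 2) by apply pow2_ge_0. nra. }
  assert (HP0 : forall x, P x = 0).
  { intro x. destruct (total_order_T (P x) 0) as [[h1|h1]|h1]; auto; exfalso.
    - destruct (HPp (- P x)) as [M HM]; [lra|].
      set (y := Rmax M x + 1).
      assert (P y <= P x) by (apply Hdec; unfold y; generalize (Rmax_r M x); lra).
      assert (Rabs (P y) < - P x) by (apply HM; unfold y; generalize (Rmax_l M x); lra).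
      revert H0. unfold Rabs; destruct Rcase_abs; lra.
    - destruct (HPm (P x)) as [M HM]; [lra|].
      set (y := Rmin M x - 1).
      assert (P x <= P y) by (apply Hdec; unfold y; generalize (Rmin_r M x); lra).
      assert (Rabs (P y + b * G 0) < P x) by (apply HM; unfold y; generalize (Rmin_l M x); lra).
      assert (0 <= b * G 0) by nra.
      revert H0. unfold Rabs; destruct Rcase_abs; lra. }
  assert (Hw00 : forall x, w x = 0).
  { intro x. assert (is_derive P x 0).
    { apply is_derive_ext with (f := fun _ => 0). intro t; rewrite HP0; auto. exact (is_derive_const (K:=R_AbsRing) (V:=R_NormedModule) 0 x). }
    assert (c * w x ^ 2 = 0).
    { rewrite <- (is_derive_unique _ _ _ (HP x)). apply is_derive_unique; auto. }
    apply Rmult_integral in H0. destruct H0; [lra|]. simpl in H0.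
    rewrite Rmult_1_r in H0. apply Rmult_integral in H0. tauto. }
  assert (Hconst : forall x y, x <= y -> v y <= v x).
  { intros x y Hxy. assert (- v x <= - v y); [|lra].
    apply (incr_of_deriv (fun t => - v t) (fun t => - w t)); auto.
    - intro t. apply (is_derive_opp (fun t => v t)). apply Hd1v.
    - intros t _. rewrite Hw00. lra. }
  destruct (lim_minf v 0 Hlm (1/2)) as [M1 HM1]; [lra|].
  destruct (lim_pinf v 1 Hlp (1/2)) as [M2 HM2]; [lra|].
  set (x := Rmin M1 M2 - 1). set (y := Rmax M1 M2 + 1).
  assert (x <= y) by (unfold x, y; generalize (Rmin_l M1 M2) (Rmax_l M1 M2); lra).
  assert (v y <= v x) by (apply Hconst; auto).
  assert (Rabs (v x - 0) < 1/2) by (apply HM1; unfold x; generalize (Rmin_l M1 M2); lra).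
  assert (Rabs (v y - 1) < 1/2) by (apply HM2; unfold y; generalize (Rmax_r M1 M2); lra).
  revert H1 H2. unfold Rabs; repeat destruct Rcase_abs; lra. }
assert (HPle : forall x, P x <= 0).
{ intro x. destruct (Rle_lt_dec (P x) 0) as [h|h]; auto. exfalso.
  destruct (HPp (P x)) as [M HM]; [lra|].
  set (y := Rmax M x + 1).
  assert (P x <= P y).
  { apply (incr_of_deriv P (fun t => c * w t ^ 2)); auto.
    - intros t _. assert (0 <= w t ^ 2) by apply pow2_ge_0. nra.
    - unfold y; generalize (Rmax_r M x); lra. }
  assert (Rabs (P y) < P x) by (apply HM; unfold y; generalize (Rmax_l M x); lra).
  revert H0. unfold Rabs; destruct Rcase_abs; lra. }
assert (Hlimp : forall alpha, 0 <= alpha ->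
  is_lim (fun x : R => exp (- alpha * (c / nu) * x) * w x ^ 2) p_infty 0).
{ intros alpha Hal. apply to_lim_pinf. intros eps He.
  destruct (Hdp (Rmin 1 eps)) as [M HM]; [apply Rmin_pos; lra|].
  exists (Rmax M 0). intros x Hx.
  assert (H1 := Hw2 x eps He (HM x ltac:(generalize (Rmax_l M 0); lra))).
  assert (exp (- alpha * (c / nu) * x) <= 1).
  { rewrite <- exp_0. assert (- alpha * (c / nu) * x <= 0).
    { assert (0 <= c/nu) by (apply Rdiv_le_0_compat; lra).
      generalize (Rmax_r M 0); intros. assert (0 <= alpha * (c/nu)) by nra. nra. }
    destruct H; [left; apply exp_increasing; auto| rewrite H; lra]. }
  assert (0 < exp (- alpha * (c / nu) * x)) by apply exp_pos.
  assert (0 <= w x ^ 2) by apply pow2_ge_0.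
  rewrite Rminus_0_r, Rabs_pos_eq by nra. nra. }
set (Q := fun x => exp (- (2) * (c / nu) * x) * w x ^ 2).
assert (HQ : forall x, is_derive Q x (exp (- (2) * (c / nu) * x) * (- (2 * b / nu) * w x * f (v x)))).
{ intro x. unfold Q. auto_derive.
  - exists (w' x); apply Hd2.
  - replace (Derive (fun x0 => w x0) x) with (w' x) by (symmetry; apply is_derive_unique; apply Hd2).
    replace (w' x) with ((c * w x - b * f (v x)) / nu) by (rewrite <- Hode'; field; lra).
    field. lra. }
split; [split|split].
- intro x. specialize (HPle x). unfold P in HPle.
  change (RInt f (v x) 1) with (G (v x)).
  replace (2 * b / nu * G (v x)) with ((2 / nu) * (b * G (v x))) by (field; lra).
  apply Rle_trans with ((2/nu) * (nu/2 * w x ^ 2)).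
  + right. field. lra.
  + apply Rmult_le_compat_l; [left; apply Rdiv_lt_0_compat; lra | lra].
- exact Hlimp.
- intros x0 Hx0. split.
  + intros x y Hxy. apply (incr_of_deriv Q _ x y HQ); [|lra].
    intros t Ht. assert (v t <= a) by (rewrite <- Hx0; apply Hmono; lra).
    assert (f (v t) <= 0) by (apply Hfneg; generalize (Hv01 t); lra).
    assert (0 < exp (- (2) * (c / nu) * t)) by apply exp_pos.
    assert (0 <= w t) by apply Hw0.
    assert (0 <= w t * (- f (v t))) by nra.
    replace (- (2 * b / nu) * w t * f (v t)) with ((2 * b / nu) * (w t * - f (v t))) by ring.
    apply Rmult_le_pos; [lra|]. apply Rmult_le_pos; [|lra].
    left; apply Rdiv_lt_0_compat; lra.
  + intros x y Hxy. assert (- Q x <= - Q y); [|unfold Q in *; lra].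
    apply (incr_of_deriv (fun t => - Q t) (fun t => - (exp (- (2) * (c / nu) * t) * (- (2 * b / nu) * w t * f (v t)))) x y); [|intros t Ht|lra].
    * intro t. apply (is_derive_opp Q). apply HQ.
    * assert (a <= v t) by (rewrite <- Hx0; apply Hmono; lra).
      assert (0 <= f (v t)) by (apply Hfpos; generalize (Hv01 t); lra).
      assert (0 < exp (- (2) * (c / nu) * t)) by apply exp_pos.
      assert (0 <= w t) by apply Hw0.
      assert (0 <= 2 * b / nu) by (apply Rdiv_le_0_compat; lra).
      assert (0 <= (2 * b / nu) * (w t * f (v t))) by (apply Rmult_le_pos; [lra|nra]).
      assert (0 <= exp (- (2) * (c / nu) * t) * ((2 * b / nu) * (w t * f (v t)))) by nra.
      nra.
- intros alpha Hal. split; [apply Hlimp; lra|].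
  apply to_lim_minf. intros eps He.
  destruct Hc0 as [Hcp|Hc0].
  + destruct (lim_minf v 0 Hlm a) as [X HX]; [lra|].
    set (X0 := X - 1).
    assert (HQm : forall x, x <= X0 -> Q x <= Q X0).
    { intros x Hx. apply (incr_of_deriv Q _ x X0 HQ); [|lra].
      intros t Ht. assert (Rabs (v t - 0) < a) by (apply HX; unfold X0 in Ht; lra).
      assert (v t <= a) by (revert H; unfold Rabs; destruct Rcase_abs; lra).
      assert (f (v t) <= 0) by (apply Hfneg; generalize (Hv01 t); lra).
      assert (0 < exp (- (2) * (c / nu) * t)) by apply exp_pos.
      assert (0 <= w t) by apply Hw0.
      assert (0 <= w t * (- f (v t))) by nra.
      replace (- (2 * b / nu) * w t * f (v t)) with ((2 * b / nu) * (w t * - f (v t))) by ring.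
      apply Rmult_le_pos; [lra|]. apply Rmult_le_pos; [|lra].
      left; apply Rdiv_lt_0_compat; lra. }
    set (Q0 := Q X0).
    assert (HQ0 : 0 <= Q0).
    { unfold Q0, Q. apply Rmult_le_pos; [left; apply exp_pos|apply pow2_ge_0]. }
    set (k := (2 - alpha) * (c / nu)).
    assert (Hk : 0 < k) by (unfold k; apply Rmult_lt_0_compat; [lra|apply Rdiv_lt_0_compat; lra]).
    exists (Rmin X0 (ln (eps / (Q0 + 1)) / k)). intros x Hx.
    assert (Hx1 : x <= X0) by (generalize (Rmin_l X0 (ln (eps / (Q0 + 1)) / k)); lra).
    assert (Hx2 : k * x < ln (eps / (Q0 + 1))).
    { assert (x < ln (eps / (Q0 + 1)) / k) by (generalize (Rmin_r X0 (ln (eps / (Q0 + 1)) / k)); lra).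
      apply Rmult_lt_compat_l with (r:=k) in H; [|lra].
      replace (k * (ln (eps / (Q0 + 1)) / k)) with (ln (eps / (Q0 + 1))) in H by (field; lra). lra. }
    assert (Hek : exp (k * x) < eps / (Q0 + 1)).
    { rewrite <- (exp_ln (eps / (Q0 + 1))) by (apply Rdiv_lt_0_compat; lra).
      apply exp_increasing; auto. }
    assert (Hsplit : exp (- alpha * (c / nu) * x) * w x ^ 2 = exp (k * x) * Q x).
    { unfold Q. rewrite <- Rmult_assoc, <- exp_plus. f_equal. f_equal. unfold k. ring. }
    rewrite Rminus_0_r, Hsplit.
    assert (0 <= Q x) by (unfold Q; apply Rmult_le_pos; [left; apply exp_pos|apply pow2_ge_0]).
    assert (0 < exp (k * x)) by apply exp_pos.
    rewrite Rabs_pos_eq by nra.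
    assert (Q x <= Q0) by (apply HQm; auto).
    assert (eps / (Q0 + 1) * (Q0 + 1) = eps) by (field; lra).
    nra.
  + destruct (Hdm (Rmin 1 eps)) as [M HM]; [apply Rmin_pos; lra|].
    exists M. intros x Hx. rewrite <- Hc0.
    replace (- alpha * (0 / nu) * x) with 0 by (field; lra). rewrite exp_0, Rmult_1_l.
    assert (H1 := Hw2 x eps He (HM x Hx)).
    rewrite Rminus_0_r, Rabs_pos_eq by apply pow2_ge_0. auto.
Qed.
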